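(* Let $m\ge1$, $\epsilon\in\{1,-1\}$, and let $M,M'\subset\mathbb{C}^2$ be (formal or real-analytic) hypersurfaces each given by an equation of the form $v=\frac12u^m\bigl(\epsilon|z|^2+\sum_{k,l\ge2}h_{kl}(u)z^k\bar z^l\bigr)$, $w=u+iv$ (with the same $m$ and $\epsilon$). Let $H(z,w)=(F(z,w),G(z,w))$ be a formal transformation with $H(0)=0$ and invertible Jacobian $H'(0)$ which maps $M$ into $M'$. Then there are $\lambda\in\mathbb{C}\setminus\{0\}$ and $\mu\in\mathbb{R}$ with $F_z(0,0)=\lambda$, $G_w(0,0)=\mu$, $\mu^{1-m}=|\lambda|^2$, and moreover $G=O(w)$ and $G_z=O(w^{m+1})$. In addition, $\frac{\partial^\ell G}{\partial w^\ell}(0,0)\in\mathbb{R}$ for all $\ell\le m$.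
   Context: $O(w^k)$ means divisibility of the formal power series by $w^k$. *)

(* Defs.v *)
From HB Require Import structures.
From mathcomp Require Import all_boot all_order all_algebra.
From mathcomp Require Import complex.
From mathcomp Require Export reals.
Set Implicit Arguments. Unset Strict Implicit. Unset Printing Implicit Defensive.
Import Order.TTheory GRing.Theory Num.Theory.
Local Open Scope ring_scope.
Local Open Scope complex_scope.

Section FPS.
Variable K : comNzRingType.

(** Formal power series in two variables (z, w): [P a b] is the coefficient
    of z^a w^b. *)
Definition fps2 := nat -> nat -> K.
(** Formal power series in three variables (z, chi, u): [P a b c] is the
    coefficient of z^a chi^b u^c  (chi plays the role of \bar z). *)
Definition fps3 := nat -> nat -> nat -> K.

Definition add3 (P Q : fps3) : fps3 := fun a b c => P a b c + Q a b c.
Definition sub3 (P Q : fps3) : fps3 := fun a b c => P a b c - Q a b c.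
Definition scale3 (k : K) (P : fps3) : fps3 := fun a b c => k * P a b c.
Definition one3 : fps3 := fun a b c => ((a == 0%N) && (b == 0%N) && (c == 0%N))%:R.
Definition Z3 : fps3 := fun a b c => ((a == 1%N) && (b == 0%N) && (c == 0%N))%:R.
Definition X3 : fps3 := fun a b c => ((a == 0%N) && (b == 1%N) && (c == 0%N))%:R.
Definition U3 : fps3 := fun a b c => ((a == 0%N) && (b == 0%N) && (c == 1%N))%:R.

Definition mul3 (P Q : fps3) : fps3 := fun a b c =>
  \sum_(i < a.+1) \sum_(j < b.+1) \sum_(k < c.+1)
     P i j k * Q (a - i)%N (b - j)%N (c - k)%N.
Definition pow3 (P : fps3) (n : nat) : fps3 := iter n (mul3 P) one3.

(** The coefficient of a monomial
    of total degree d only receives contributions from i + j <= d (since A, B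
    have no constant term), so the sum is truncated at i, j <= d. *)
Definition comp2 (P : fps2) (A B : fps3) : fps3 := fun a b c =>
  let d := (a + b + c)%N in
  \sum_(i < d.+1) \sum_(j < d.+1) P i j * mul3 (pow3 A i) (pow3 B j) a b c.

Definition comp3 (P : fps3) (A B D : fps3) : fps3 := fun a b c =>
  let d := (a + b + c)%N in
  \sum_(i < d.+1) \sum_(j < d.+1) \sum_(k < d.+1)
     P i j k * mul3 (mul3 (pow3 A i) (pow3 B j)) (pow3 D k) a b c.

Definition dz (P : fps2) : fps2 := fun a b => (a.+1)%:R * P a.+1 b.
Definition dw (P : fps2) : fps2 := fun a b => (b.+1)%:R * P a b.+1.
Definition dwn (l : nat) (P : fps2) : fps2 := iter l dw P.

Definition O_w (k : nat) (P : fps2) : Prop := forall a b, (b < k)%N -> P a b = 0.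

End FPS.

Section Hypersurface.
Variable R : realType.
Local Notation C := R[i].

Definition conj2 (P : fps2 C) : fps2 C := fun a b => (P a b)^*.

(** [h k l c] is the coefficient of u^c in the series h_{kl}(u) (only k,l >= 2
    are used).  The right-hand side  phi(z, \bar z, u) =
    1/2 u^m (eps z \bar z + sum_{k,l>=2} h_{kl}(u) z^k \bar z^l)
    of the equation  v = phi  of the hypersurface, as a series in (z,chi,u). *)
Definition hyp_phi (m : nat) (eps : R) (h : nat -> nat -> nat -> C) : fps3 C :=
  fun a b c =>
    if (c < m)%N then 0 else
    2^-1 * (eps%:C * ((a == 1%N) && (b == 1%N) && (c == m))%:R
            + ((2 <= a)%N && (2 <= b)%N)%:R * h a b (c - m)%N).

(** reality of the defining equation: conj(h_{kl}) = h_{lk}, so that phi is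
    real-valued and v = phi defines a real hypersurface *)
Definition hyp_real (h : nat -> nat -> nat -> C) : Prop :=
  forall k l c, (2 <= k)%N -> (2 <= l)%N -> h l k c = (h k l c)^*.

(** The formal map H = (F, G) sends M = {v = phi} into M' = {v = phi'}:
    the defining function  rho'(z',w',chi',tau') = (w'-tau')/(2i)
    - phi'(z',chi',(w'+tau')/2)  composed with (H(z,w), \bar H(chi,tau))
    vanishes on the complexification of M, parametrized by (z, chi, u) via
    w = u + i phi(z,chi,u), tau = u - i phi(z,chi,u). *)
Definition maps_into (phi phi' : fps3 C) (F G : fps2 C) : Prop :=
  let W := add3 (U3 C) (scale3 'i phi) in
  let T := sub3 (U3 C) (scale3 'i phi) in
  let FW := comp2 F (Z3 C) W in
  let GW := comp2 G (Z3 C) W in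
  let FbT := comp2 (conj2 F) (X3 C) T in
  let GbT := comp2 (conj2 G) (X3 C) T in
  forall a b c,
    GW a b c - GbT a b c
    = 2%:R * 'i * comp3 phi' FW FbT (scale3 (2^-1) (add3 GW GbT)) a b c.

Definition jac0 (F G : fps2 C) : 'M[C]_2 :=
  \matrix_(i < 2, j < 2)
     (if i == 0 then (if j == 0 then dz F 0 0 else dw F 0 0)
      else (if j == 0 then dz G 0 0 else dw G 0 0)).

End Hypersurface.

(* Main.v *)
Require Import Defs.
From HB Require Import structures.
From mathcomp Require Import all_boot all_order all_algebra.
From mathcomp Require Import complex.
From mathcomp Require Import reals.
From mathcomp Require Import zify ring lra.
From Stdlib Require Import FunctionalExtensionality.
Set Implicit Arguments. Unset Strict Implicit. Unset Printing Implicit Defensive.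
Import Order.TTheory GRing.Theory Num.Theory.
Local Open Scope ring_scope.
Local Open Scope complex_scope.

Section Gen.
Variable K : comNzRingType.
Implicit Types P Q : fps3 K.

Definition mon (p q r : nat) : fps3 K :=
  fun a b c => ((a == p) && (b == q) && (c == r))%:R.

Lemma sum1_delta (n p : nat) (f : nat -> K) :
  (forall i : nat, (i < n)%N -> i != p -> f i = 0) ->
  \sum_(i < n) f i = if (p < n)%N then f p else 0.
Proof.
move=> H; case: ifP => hp.
  rewrite (bigD1 (Ordinal hp)) //= big1 ?addr0 // => i /eqP hi.
  apply: H (ltn_ord i) _; apply/eqP => e; apply: hi; exact: val_inj.
apply: big1 => i _; apply: H (ltn_ord i) _; apply/eqP => e.
by move: (ltn_ord i); rewrite e hp.
Qed.

Lemma sum2_delta (n1 n2 p q : nat) (f : nat -> nat -> K) :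
  (forall i j : nat, (i < n1)%N -> (j < n2)%N -> ~~ ((i == p) && (j == q)) -> f i j = 0) ->
  \sum_(i < n1) \sum_(j < n2) f i j = if (p < n1)%N && (q < n2)%N then f p q else 0.
Proof.
move=> H; rewrite (sum1_delta (p:=p) (f := fun i => \sum_(j < n2) f i j)).
  case hp: (p < n1)%N => //=; rewrite (sum1_delta (p:=q)) //.
  by move=> j hj hq; apply: H => //; rewrite negb_and hq orbT.
move=> i hi hip; apply: big1 => j _; apply: H => //; by rewrite negb_and hip.
Qed.

Lemma sum3_delta (n1 n2 n3 p q r : nat) (f : nat -> nat -> nat -> K) :
  (forall i j k : nat, (i < n1)%N -> (j < n2)%N -> (k < n3)%N ->
     ~~ [&& i == p, j == q & k == r] -> f i j k = 0) ->
  \sum_(i < n1) \sum_(j < n2) \sum_(k < n3) f i j k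
   = if [&& (p < n1)%N, (q < n2)%N & (r < n3)%N] then f p q r else 0.
Proof.
move=> H; rewrite (sum1_delta (p:=p) (f := fun i => \sum_(j < n2) \sum_(k < n3) f i j k)).
  case hp: (p < n1)%N => //=; rewrite (sum2_delta (p:=q) (q:=r)) //.
  by move=> j k hj hk hq; apply: H => //; rewrite eqxx.
move=> i hi hip; apply: big1 => j _; apply: big1 => k _; apply: H => //.
by rewrite negb_and hip.
Qed.

Lemma mul3_delta P Q a b c p q r :
  (forall i j k, (i <= a)%N -> (j <= b)%N -> (k <= c)%N -> ~~ [&& i == p, j == q & k == r] ->
     P i j k * Q (a - i)%N (b - j)%N (c - k)%N = 0) ->
  mul3 P Q a b c = if [&& (p <= a)%N, (q <= b)%N & (r <= c)%N]
                   then P p q r * Q (a - p)%N (b - q)%N (c - r)%N else 0.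
Proof.
move=> H; rewrite /mul3 (sum3_delta (p:=p) (q:=q) (r:=r)
   (f := fun i j k => P i j k * Q (a - i)%N (b - j)%N (c - k)%N)) ?ltnS //.
Qed.

Lemma mul_monl p q r Q a b c :
  mul3 (mon p q r) Q a b c =
  if [&& (p <= a)%N, (q <= b)%N & (r <= c)%N] then Q (a - p)%N (b - q)%N (c - r)%N else 0.
Proof.
rewrite (mul3_delta (p:=p) (q:=q) (r:=r)) /mon.
  by rewrite !eqxx mul1r.
move=> i j k _ _ _ hne; rewrite andbA in hne.
by rewrite (negbTE hne) mul0r.
Qed.

Lemma mul_monr p q r Q a b c :
  mul3 Q (mon p q r) a b c =
  if [&& (p <= a)%N, (q <= b)%N & (r <= c)%N] then Q (a - p)%N (b - q)%N (c - r)%N else 0.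
Proof.
rewrite (mul3_delta (p:=(a-p)%N) (q:=(b-q)%N) (r:=(c-r)%N)) /mon.
  rewrite !leq_subr /=.
  case: ifP => H.
    move/and3P: H => [h1 h2 h3].
    by rewrite !subKn // !eqxx mulr1.
  suff -> : ((a - (a - p) == p) && (b - (b - q) == q) && (c - (c - r) == r))%N = false.
    by rewrite mulr0.
  apply/negbTE; apply/negP => /andP[/andP[/eqP e1 /eqP e2] /eqP e3].
  move/negbT: H; rewrite -e1 -e2 -e3 !leq_subr. done.
move=> i j k hi hj hk hne.
suff -> : ((a - i == p) && (b - j == q) && (c - k == r))%N = false by rewrite mulr0.
apply/negbTE; apply: contra hne => /andP[/andP[/eqP e1 /eqP e2] /eqP e3].
apply/and3P; split; apply/eqP; lia.
Qed.
Lemma one3_mon : one3 K = mon 0 0 0. Proof. by []. Qed.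
Lemma Z3_mon : Z3 K = mon 1 0 0. Proof. by []. Qed.
Lemma X3_mon : X3 K = mon 0 1 0. Proof. by []. Qed.
Lemma U3_mon : U3 K = mon 0 0 1. Proof. by []. Qed.

Lemma pow_mon p q r n : pow3 (mon p q r) n = mon (n * p) (n * q) (n * r).
Proof.
elim: n => [|n IH] //=.
apply: functional_extensionality => a; apply: functional_extensionality => b;
apply: functional_extensionality => c.
rewrite mul_monl IH /mon.
case: ifP => H.
  congr (_%:R); move/and3P: H => [h1 h2 h3].
  rewrite !mulSn; lia.
case E: (_ && _) => //.
move: E => /andP[/andP[/eqP e1 /eqP e2] /eqP e3].
by move: H; rewrite e1 e2 e3 !mulSn !leq_addr.
Qed.

Lemma pow1 P : pow3 P 1 = P.
Proof.
apply: functional_extensionality => a; apply: functional_extensionality => b;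
apply: functional_extensionality => c.
by rewrite /= one3_mon mul_monr /= !subn0.
Qed.

Lemma mul_addl P P' Q a b c :
  mul3 (add3 P P') Q a b c = mul3 P Q a b c + mul3 P' Q a b c.
Proof.
rewrite /mul3 /add3 -big_split; apply: eq_bigr => i _.
rewrite -big_split; apply: eq_bigr => j _.
rewrite -big_split; apply: eq_bigr => k _; exact: mulrDl.
Qed.

Lemma mul_scalel s P Q a b c :
  mul3 (scale3 s P) Q a b c = s * mul3 P Q a b c.
Proof.
rewrite /mul3 /scale3 mulr_sumr; apply: eq_bigr => i _.
rewrite mulr_sumr; apply: eq_bigr => j _.
rewrite mulr_sumr; apply: eq_bigr => k _; by rewrite mulrA.
Qed.

Lemma mul_extl P P' Q a b c :
  (forall i j k, (i <= a)%N -> (j <= b)%N -> (k <= c)%N -> P i j k = P' i j k) ->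
  mul3 P Q a b c = mul3 P' Q a b c.
Proof.
move=> H; apply: eq_bigr => i _; apply: eq_bigr => j _; apply: eq_bigr => k _.
by rewrite H // -ltnS.
Qed.

Section Weight.
Variable w : nat -> nat -> nat -> nat.
Hypothesis wadd : forall a b c a' b' c',
  w (a + a')%N (b + b')%N (c + c')%N = (w a b c + w a' b' c')%N.

Definition ordw (n : nat) P := forall a b c, (w a b c < n)%N -> P a b c = 0.

Lemma ordw_mul p q P Q : ordw p P -> ordw q Q -> ordw (p + q) (mul3 P Q).
Proof.
move=> HP HQ a b c hlt.
apply: big1 => i _; apply: big1 => j _; apply: big1 => k _.
case: (ltnP (w i j k) p) => h; first by rewrite HP ?mul0r.
rewrite HQ ?mulr0 //.
have := wadd i j k (a - i) (b - j) (c - k).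
have hi := ltn_ord i; have hj := ltn_ord j; have hk := ltn_ord k.
rewrite ltnS in hi hj hk.
rewrite !subnKC // => e; rewrite e in hlt; lia.
Qed.

Lemma ordw_pow p P n : ordw p P -> ordw (n * p) (pow3 P n).
Proof.
move=> HP; elim: n => [|n IH] /=; first by move=> a b c.
rewrite mulSn; exact: ordw_mul.
Qed.

Lemma ordw_le p q P : ordw p P -> (q <= p)%N -> ordw q P.
Proof. move=> H hq a b c h; apply: H; exact: leq_trans h hq. Qed.

Lemma ordw0 P : ordw 0 P.
Proof. by move=> a b c. Qed.
End Weight.

Definition wT (a b c : nat) := (a + b + c)%N.
Definition wU (a b c : nat) := (b + c)%N.
Lemma wT_add a b c a' b' c' : wT (a + a') (b + b') (c + c') = (wT a b c + wT a' b' c')%N.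
Proof. rewrite /wT; lia. Qed.
Lemma wU_add a b c a' b' c' : wU (a + a') (b + b') (c + c') = (wU a b c + wU a' b' c')%N.
Proof. rewrite /wU; lia. Qed.


Lemma powY_b0 (Y : fps3 K) : (forall i k, Y i 0%N k = U3 K i 0%N k) ->
  forall n a c, pow3 Y n a 0%N c = ((a == 0%N) && (c == n))%:R.
Proof.
move=> HY; elim=> [|n IH] a c /=.
  by rewrite /one3 eqxx andbT.
rewrite (mul_extl (P' := mon 0 0 1)); last first.
  move=> i j k _ hj _; move: hj; rewrite leqn0 => /eqP ->; exact: HY.
rewrite mul_monl IH /= !subn0.
case: ifP => H; first by congr (_%:R); lia.
have -> : ((a == 0%N) && (c == n.+1)) = false by lia.
by [].
Qed.


Lemma comp2_Z (P : fps2 K) (Y : fps3 K) a b c : comp2 P (Z3 K) Y a b c =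
  \sum_(i < (a + b + c).+1) \sum_(j < (a + b + c).+1)
     P i j * (if (i <= a)%N then pow3 Y j (a - i)%N b c else 0).
Proof.
apply: eq_bigr => i _; apply: eq_bigr => j _.
by rewrite Z3_mon pow_mon mul_monl !muln0 muln1 !leq0n !andbT !subn0.
Qed.

Lemma comp2_X (P : fps2 K) (Y : fps3 K) a b c : comp2 P (X3 K) Y a b c =
  \sum_(i < (a + b + c).+1) \sum_(j < (a + b + c).+1)
     P i j * (if (i <= b)%N then pow3 Y j a (b - i)%N c else 0).
Proof.
apply: eq_bigr => i _; apply: eq_bigr => j _.
rewrite X3_mon pow_mon mul_monl !muln0 muln1 /=. by rewrite leq0n andbT !subn0.
Qed.

Section B0.
Variable Y : fps3 K.
Hypothesis HY : forall i k, Y i 0%N k = U3 K i 0%N k.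

Lemma comp2_Z_b0 (P : fps2 K) a c : comp2 P (Z3 K) Y a 0 c = P a c.
Proof.
rewrite comp2_Z (sum2_delta (p:=a) (q:=c)
  (f := fun i j => P i j * (if (i <= a)%N then pow3 Y j (a - i)%N 0 c else 0))).
  rewrite leqnn subnn (powY_b0 HY) !eqxx mulr1.
  case: ifP => // H; exfalso; lia.
move=> i j hi hj hne; case: ifP => hia; last by rewrite mulr0.
rewrite (powY_b0 HY).
have -> : (((a - i)%N == 0%N) && (c == j)) = false by lia.
by rewrite mulr0.
Qed.

Lemma comp2_X_b0 (P : fps2 K) a c : comp2 P (X3 K) Y a 0 c = (a == 0%N)%:R * P 0 c.
Proof.
rewrite comp2_X (sum2_delta (p:=0) (q:=c)
  (f := fun i j => P i j * (if (i <= 0)%N then pow3 Y j a (0 - i)%N c else 0))).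
  rewrite leqnn subnn (powY_b0 HY) !eqxx andbT mulrC.
  case: ifP => // H; exfalso; lia.
move=> i j hi hj hne; case: ifP => hia; last by rewrite mulr0.
rewrite (powY_b0 HY).
have -> : ((a == 0%N) && (c == j)) = false by lia.
by rewrite mulr0.
Qed.
End B0.

Lemma powS_deg (S : fps3 K) (mu : K) : ordw wT 1 S -> S 1 0 0 = 0 -> S 0 1 0 = 0 ->
  S 0 0 1 = mu -> forall k a b c, (a + b + c = k)%N ->
  pow3 S k a b c = if (a == 0%N) && (b == 0%N) then mu ^+ k else 0.
Proof.
move=> H1 H100 H010 H001; elim=> [|k IH] a b c habc /=.
  have [-> [-> ->]] : [/\ a = 0%N, b = 0%N & c = 0%N] by split; lia.
  by rewrite /one3 expr0.
rewrite (mul3_delta (p:=0) (q:=0) (r:=1)).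
  rewrite !subn0 H001 !leq0n /=.
  case: ifP => hc.
    rewrite IH; last lia.
    by case: ifP => _; rewrite ?exprS ?mulr0.
  by have -> : ((a == 0%N) && (b == 0%N)) = false by lia.
move=> i j l hi hj hl hne.
case: (leqP 2 (i + j + l)) => h2.
  rewrite (ordw_pow wT_add (n:=k) H1) ?mulr0 //; rewrite /wT; lia.
case: i hi hne h2 => [|[|i]]; case: j hj => [|[|j]]; case: l hl => [|[|l]] //= hl hj hi hne h2;
  try (exfalso; lia); by rewrite ?H100 ?H010 ?(H1 0%N 0%N 0%N) ?mul0r.
Qed.

Lemma prod_11m (A S : fps3 K) (mu : K) m :
  ordw wT 2 A ->
  (forall a b c, (a + b + c = m)%N -> pow3 S m a b c = if (a == 0%N) && (b == 0%N) then mu ^+ m else 0) ->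
  ordw wT m (pow3 S m) ->
  mul3 A (pow3 S m) 1 1 m = A 1 1 0 * mu ^+ m.
Proof.
move=> HA HS HSo.
rewrite (mul3_delta (p:=1) (q:=1) (r:=0)) /=. rewrite subnn subn0 HS ?add0n //.
move=> i j k hi hj hk hne.
case: (ltnP (i + j + k) 2) => h1; first by rewrite HA ?mul0r.
case: (ltnP 2 (i + j + k)) => h2; first by rewrite HSo ?mulr0 // /wT; lia.
rewrite HS; last lia.
have -> : (((1 - i)%N == 0%N) && ((1 - j)%N == 0%N)) = false by lia.
by rewrite mulr0.
Qed.

Lemma prod_110 (A B : fps3 K) : A 0 0 0 = 0 -> A 0 1 0 = 0 -> B 0 0 0 = 0 ->
  mul3 A B 1 1 0 = A 1 0 0 * B 0 1 0.
Proof.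
move=> HA0 HA1 HB0.
rewrite (mul3_delta (p:=1) (q:=0) (r:=0)) //.
move=> i j k hi hj hk hne.
case: i hi hne => [|[|i]] //; case: j hj => [|[|j]] //; case: k hk => [|k] //= hk hj hi hne;
  by rewrite ?HA0 ?HA1 ?HB0 ?mul0r ?mulr0.
Qed.

Lemma comp3_11m (phi A B D : fps3 K) m :
  (forall i j k, ~~ [&& (1 <= i)%N, (1 <= j)%N & (m <= k)%N] -> phi i j k = 0) ->
  ordw wT 1 A -> ordw wT 1 B -> ordw wT 1 D ->
  comp3 phi A B D 1 1 m = phi 1 1 m * mul3 (mul3 A B) (pow3 D m) 1 1 m.
Proof.
move=> Hphi HA HB HD.
rewrite /comp3 (sum3_delta (p:=1) (q:=1) (r:=m)
  (f := fun i j k => phi i j k * mul3 (mul3 (pow3 A i) (pow3 B j)) (pow3 D k) 1 1 m)).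
  rewrite !pow1; case: ifP => // H; exfalso; lia.
move=> i j k hi hj hk hne.
case E: [&& (1 <= i)%N, (1 <= j)%N & (m <= k)%N]; last by rewrite Hphi ?E ?mul0r.
rewrite (ordw_mul wT_add (ordw_mul wT_add (ordw_pow wT_add (n:=i) HA) (ordw_pow wT_add (n:=j) HB))
   (ordw_pow wT_add (n:=k) HD)) ?mulr0 //.
rewrite /wT; lia.
Qed.

Lemma comp3_b0 (phi A B D : fps3 K) m s a c :
  (forall i j k, ~~ [&& (1 <= i)%N, (1 <= j)%N & (m <= k)%N] -> phi i j k = 0) ->
  ordw wU 1 B -> ordw wU s D -> (c < 1 + m * s)%N ->
  comp3 phi A B D a 0 c = 0.
Proof.
move=> Hphi HB HD hc.
apply: big1 => i _; apply: big1 => j _; apply: big1 => k _.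
case E: [&& (1 <= i)%N, (1 <= j)%N & (m <= k)%N]; last by rewrite Hphi ?E ?mul0r.
have HA : ordw wU 0 (pow3 A i) by exact: ordw0.
rewrite (ordw_mul wU_add (ordw_mul wU_add HA (ordw_pow wU_add (n:=j) HB))
   (ordw_pow wU_add (n:=k) HD)) ?mulr0 //.
move/and3P: E => [e1 e2 e3].
have : (m * s <= k * s)%N by rewrite leq_mul2r e3 orbT.
rewrite /wU; lia.
Qed.

Section Box.
Variable m : nat.
Hypothesis hm : (1 <= m)%N.

Lemma powY_box (Y : fps3 K) (kap : K) :
  (forall i j k, (i <= 1)%N -> (j <= 1)%N -> Y i j k = U3 K i j k + kap * mon 1 1 m i j k) ->
  forall n a b c, (a <= 1)%N -> (b <= 1)%N ->
  pow3 Y n a b c = if (a == 0%N) && (b == 0%N) then (c == n)%:R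
                   else if (a == 1%N) && (b == 1%N) then n%:R * kap * (c == (n + m).-1)%:R
                   else 0.
Proof.
move=> HY; elim=> [|n IH] a b c ha hb /=.
  by case: a ha => [|[|a]] // _; case: b hb => [|[|b]] // _ /=; rewrite ?mul0r.
rewrite (mul_extl (P' := add3 (mon 0 0 1) (scale3 kap (mon 1 1 m)))); last first.
  move=> i j k hi hj _; rewrite /add3 /scale3 HY //.
    exact: leq_trans hi ha.
  exact: leq_trans hj hb.
rewrite mul_addl mul_scalel !mul_monl.
case: a ha => [|[|a]] // _; case: b hb => [|[|b]] // _ /=;
  rewrite ?subn0 ?subnn !IH //= ?mulr0 ?addr0.
- case: ifP => H; first by congr (_%:R); lia.
  by have -> : (c == n.+1) = false by lia.
- by case: ifP.
- by case: ifP.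
- have [E|NE] := eqVneq c (n + m)%N.
    rewrite E.
    have -> : (0 < n + m)%N by lia.
    have -> : (m <= n + m)%N by lia.
    have -> : ((n + m - 1)%N == (n + m).-1) = true by lia.
    have -> : ((n + m - m)%N == n) = true by lia.
    by rewrite !mulr1 -natr1 mulrDl mul1r.
  rewrite mulr0.
  case: ifP => h1; case: ifP => h2.
  + have -> : ((c - 1)%N == (n + m).-1) = false by lia.
    have -> : ((c - m)%N == n) = false by lia.
    by rewrite !mulr0 addr0.
  + have -> : ((c - 1)%N == (n + m).-1) = false by lia.
    by rewrite !mulr0 addr0.
  + have -> : ((c - m)%N == n) = false by lia.
    by rewrite !mulr0 addr0.
  + by rewrite mulr0 addr0.
Qed.


Section BoxY.
Variables (Y : fps3 K) (kap : K).
Hypothesis HY : forall i j k, (i <= 1)%N -> (j <= 1)%N -> Y i j k = U3 K i j k + kap * mon 1 1 m i j k.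

Lemma comp2_Z_11m (P : fps2 K) : comp2 P (Z3 K) Y 1 1 m = P 0 1 * kap.
Proof.
rewrite comp2_Z (sum2_delta (p:=0) (q:=1)
  (f := fun i j => P i j * (if (i <= 1)%N then pow3 Y j (1 - i)%N 1 m else 0))).
  have -> : ((0 < (1 + 1 + m).+1) && (1 < (1 + 1 + m).+1))%N = true by lia.
  rewrite (powY_box HY) //= mul1r.
  have -> : (m == m.+1.-1) = true by lia.
  by rewrite mulr1.
move=> i j hi hj hne; case: ifP => hia; last by rewrite mulr0.
rewrite (powY_box HY) //; last lia.
case: i hi hne hia => [|[|i]] // hi hne hia /=.
  have -> : (m == (j + m).-1) = false by lia.
  by rewrite !mulr0.
by rewrite mulr0.
Qed.

Lemma comp2_X_11m (P : fps2 K) : comp2 P (X3 K) Y 1 1 m = P 0 1 * kap.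
Proof.
rewrite comp2_X (sum2_delta (p:=0) (q:=1)
  (f := fun i j => P i j * (if (i <= 1)%N then pow3 Y j 1 (1 - i)%N m else 0))).
  have -> : ((0 < (1 + 1 + m).+1) && (1 < (1 + 1 + m).+1))%N = true by lia.
  rewrite (powY_box HY) //= mul1r.
  have -> : (m == m.+1.-1) = true by lia.
  by rewrite mulr1.
move=> i j hi hj hne; case: ifP => hia; last by rewrite mulr0.
rewrite (powY_box HY) //; last lia.
case: i hi hne hia => [|[|i]] // hi hne hia /=.
  have -> : (m == (j + m).-1) = false by lia.
  by rewrite !mulr0.
by rewrite mulr0.
Qed.

Lemma comp2_Z_010 (P : fps2 K) : comp2 P (Z3 K) Y 0 1 0 = 0.
Proof.
rewrite comp2_Z; apply: big1 => i _; apply: big1 => j _.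
case: ifP => hi; last by rewrite mulr0.
by rewrite sub0n (powY_box HY) //= mulr0.
Qed.

Lemma comp2_X_010 (P : fps2 K) : comp2 P (X3 K) Y 0 1 0 = P 1 0.
Proof.
rewrite comp2_X (sum2_delta (p:=1) (q:=0)
  (f := fun i j => P i j * (if (i <= 1)%N then pow3 Y j 0 (1 - i)%N 0 else 0))).
  by rewrite /= subnn /one3 /= mulr1.
move=> i j hi hj hne; case: ifP => hia; last by rewrite mulr0.
rewrite (powY_box HY) //; last lia.
case: i hi hne hia => [|[|i]] // hi hne hia /=.
  by rewrite mulr0.
have -> : (0 == j) = false by lia.
by rewrite mulr0.
Qed.
End BoxY.
End Box.
End Gen.

Lemma conj_real (R : rcfType) (x : R[i]) : x = conjc x -> x = (complex.Re x)%:C.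
Proof.
case: x => a b /= [] hb.
have -> : b = 0 by lra.
by [].
Qed.

Lemma dwn_real (R : rcfType) (P : fps2 R[i]) l : forall b,
  (forall c, (b <= c)%N -> (c <= b + l)%N -> P 0%N c \is Num.real) ->
  dwn l P 0%N b \is Num.real.
Proof.
elim: l => [|l IH] b H.
  by apply: H; rewrite ?addn0.
change (dwn l.+1 P 0%N b) with ((b.+1)%:R * dwn l P 0%N b.+1).
rewrite rpredM ?realn // IH // => c h1 h2; apply: H; lia.
Qed.

Lemma det2 (K : comNzRingType) (A : 'M[K]_2) : \det A = A 0 0 * A 1 1 - A 0 1 * A 1 0.
Proof.
rewrite (expand_det_row _ 0) !big_ord_recl big_ord0 addr0 /cofactor !det_mx11 /=.
rewrite !mxE /= expr0 expr1 mul1r mulN1r mulrN.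
congr (_ * _ - _ * _); congr (A _ _); apply/val_inj => //.
Qed.

Unset Implicit Arguments.

Theorem lemma3p1 (R : realType) (m : nat) (eps : R)
  (h h' : nat -> nat -> nat -> R[i]) (F G : fps2 R[i]) :
  (1 <= m)%N ->
  (eps = 1 \/ eps = -1) ->
  hyp_real h -> hyp_real h' ->
  F 0%N 0%N = 0 -> G 0%N 0%N = 0 ->
  \det (jac0 F G) != 0 ->
  maps_into (hyp_phi m eps h) (hyp_phi m eps h') F G ->
  exists (lam : R[i]) (mu : R),
    [/\ lam != 0, dz F 0%N 0%N = lam, dw G 0%N 0%N = mu%:C
       & (mu ^- (m - 1)%N)%:C = `|lam| ^+ 2] /\
    [/\ O_w 1 G, O_w m.+1 (dz G)
       & forall l, (l <= m)%N -> dwn l G 0%N 0%N \is Num.real].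
Proof.
move=> hm heps _ _ F0 G0 hdet Hmap.
pose phi := hyp_phi m eps h. pose phi' := hyp_phi m eps h'.
pose W := add3 (U3 R[i]) (scale3 'i phi).
pose T := sub3 (U3 R[i]) (scale3 'i phi).
pose FW := comp2 F (Z3 R[i]) W.
pose GW := comp2 G (Z3 R[i]) W.
pose FbT := comp2 (conj2 F) (X3 R[i]) T.
pose GbT := comp2 (conj2 G) (X3 R[i]) T.
pose S := scale3 (2^-1) (add3 GW GbT).
have E : forall a b c, GW a b c - GbT a b c = 2%:R * 'i * comp3 phi' FW FbT S a b c := Hmap.
clear Hmap.
pose kap : R[i] := 'i * (2^-1 * eps%:C).
have hW0 : forall i k, W i 0%N k = U3 R[i] i 0%N k.
  move=> i k; rewrite /W /add3 /scale3 /phi /hyp_phi.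
  case: ifP => _; first by rewrite mulr0 addr0.
  rewrite andbF andFb ltn0 andbF. by rewrite /= !mulr0n !(mulr0, mul0r, addr0).
have hT0 : forall i k, T i 0%N k = U3 R[i] i 0%N k.
  move=> i k; rewrite /T /sub3 /scale3 /phi /hyp_phi.
  case: ifP => _; first by rewrite mulr0 subr0.
  by rewrite andbF andFb ltn0 andbF /= !mulr0n !(mulr0, mul0r, addr0, subr0).
have hWbox : forall i j k, (i <= 1)%N -> (j <= 1)%N ->
    W i j k = U3 R[i] i j k + kap * mon R[i] 1 1 m i j k.
  move=> i j k hi hj; rewrite /W /add3 /scale3 /phi /hyp_phi /mon /kap.
  have -> : (2 <= i)%N = false by lia.
  case: ifP => hk.
    have -> : (k == m) = false by lia.
    by rewrite !andbF !mulr0.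
  by rewrite andFb /= mulr0n mul0r addr0 !mulrA.
have hTbox : forall i j k, (i <= 1)%N -> (j <= 1)%N ->
    T i j k = U3 R[i] i j k + (- kap) * mon R[i] 1 1 m i j k.
  move=> i j k hi hj; rewrite /T /sub3 /scale3 /phi /hyp_phi /mon /kap.
  have -> : (2 <= i)%N = false by lia.
  case: ifP => hk.
    have -> : (k == m) = false by lia.
    by rewrite !andbF !mulr0 subr0 addr0.
  by rewrite andFb /= mulr0n mul0r addr0 !mulrA mulNr.
have hphi' : forall i j k, ~~ [&& (1 <= i)%N, (1 <= j)%N & (m <= k)%N] -> phi' i j k = 0.
  move=> i j k hne; rewrite /phi' /hyp_phi; case: ifP => // hk.
  have -> : ((i == 1%N) && (j == 1%N) && (k == m)) = false by lia.
  have -> : ((2 <= i)%N && (2 <= j)%N) = false by lia.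
  by rewrite mulr0 mul0r addr0 mulr0.
have hGW0 : forall a c, GW a 0%N c = G a c := comp2_Z_b0 hW0 G.
have hFW0 : forall a c, FW a 0%N c = F a c := comp2_Z_b0 hW0 F.
have hGbT0 : forall a c, GbT a 0%N c = (a == 0%N)%:R * conjc (G 0%N c) := comp2_X_b0 hT0 (conj2 G).
have hFbT0 : forall a c, FbT a 0%N c = (a == 0%N)%:R * conjc (F 0%N c) := comp2_X_b0 hT0 (conj2 F).
have FbTU : ordw wU 1 FbT.
  move=> a b c; rewrite /wU => hbc.
  have [-> ->] : b = 0%N /\ c = 0%N by lia.
  by rewrite hFbT0 F0 raddf0 mulr0.
have Ga0 : forall a, G a 0%N = 0.
  move=> a; have := E a 0%N 0%N.
  rewrite (comp3_b0 FW (s := 0) a hphi' FbTU (ordw0 S)) // mulr0 hGW0 hGbT0 G0 raddf0 mulr0 subr0.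
  by [].
have SU : ordw wU 1 S.
  move=> a b c; rewrite /wU => hbc.
  have [-> ->] : b = 0%N /\ c = 0%N by lia.
  by rewrite /S /scale3 /add3 hGW0 hGbT0 Ga0 G0 raddf0 mulr0 addr0 mulr0.
have Gac : forall a c, (c <= m)%N -> G a c = (a == 0%N)%:R * conjc (G 0%N c).
  move=> a c hc; have := E a 0%N c.
  rewrite (comp3_b0 FW (s := 1) a hphi' FbTU SU); last by rewrite muln1 add1n ltnS.
  by rewrite mulr0 hGW0 hGbT0 => /eqP; rewrite subr_eq0 => /eqP.
have Gm : forall a c, (1 <= a)%N -> (c <= m)%N -> G a c = 0.
  move=> a c ha hc; rewrite Gac //.
  have -> : (a == 0%N) = false by lia.
  by rewrite mul0r.
have Greal : forall c, (c <= m)%N -> G 0%N c = (complex.Re (G 0%N c))%:C.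
  move=> c hc; apply: conj_real; by rewrite {1}Gac // eqxx mul1r.
have Gstar : conjc (G 0%N 1%N) = G 0%N 1%N by rewrite {2}Gac // eqxx mul1r.
have GW11 : GW 1%N 1%N m = G 0%N 1%N * kap := comp2_Z_11m hm hWbox G.
have GbT11 : GbT 1%N 1%N m = conj2 G 0%N 1%N * - kap := comp2_X_11m hm hTbox (conj2 G).
have FW010 : FW 0%N 1%N 0%N = 0 := comp2_Z_010 hm hWbox F.
have GW010 : GW 0%N 1%N 0%N = 0 := comp2_Z_010 hm hWbox G.
have FbT010 : FbT 0%N 1%N 0%N = conj2 F 1%N 0%N := comp2_X_010 hm hTbox (conj2 F).
have GbT010 : GbT 0%N 1%N 0%N = conj2 G 1%N 0%N := comp2_X_010 hm hTbox (conj2 G).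
have FWo : ordw wT 1 FW.
  move=> a b c; rewrite /wT => habc.
  have [-> [-> ->]] : [/\ a = 0%N, b = 0%N & c = 0%N] by split; lia.
  by rewrite hFW0 F0.
have FbTo : ordw wT 1 FbT.
  move=> a b c; rewrite /wT => habc.
  have [-> [-> ->]] : [/\ a = 0%N, b = 0%N & c = 0%N] by split; lia.
  by rewrite hFbT0 F0 raddf0 mulr0.
have So : ordw wT 1 S.
  move=> a b c; rewrite /wT => habc.
  have [-> [-> ->]] : [/\ a = 0%N, b = 0%N & c = 0%N] by split; lia.
  by rewrite /S /scale3 /add3 hGW0 hGbT0 G0 raddf0 mulr0 addr0 mulr0.
have S100 : S 1%N 0%N 0%N = 0.
  by rewrite /S /scale3 /add3 hGW0 hGbT0 Ga0 mul0r addr0 mulr0.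
have S010 : S 0%N 1%N 0%N = 0.
  by rewrite /S /scale3 /add3 GW010 GbT010 /conj2 Ga0 raddf0 addr0 mulr0.
have S001 : S 0%N 0%N 1%N = G 0%N 1%N.
  rewrite /S /scale3 /add3 hGW0 hGbT0 eqxx mul1r Gstar.
  by field.
have HS := powS_deg So S100 S010 S001.
have phi11 : phi' 1%N 1%N m = 2^-1 * eps%:C.
  rewrite /phi' /hyp_phi ltnn !eqxx /=.
  by rewrite mul0r addr0 mulr1.
have RHS : comp3 phi' FW FbT S 1%N 1%N m
    = 2^-1 * eps%:C * (F 1%N 0%N * conjc (F 1%N 0%N) * G 0%N 1%N ^+ m).
  rewrite (comp3_11m hphi' FWo FbTo So) phi11.
  have So' : ordw wT m (pow3 S m).
    apply: (ordw_le (ordw_pow wT_add (n:=m) So)); by rewrite muln1.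
  rewrite (prod_11m (ordw_mul wT_add FWo FbTo) (fun a b c => HS m a b c) So').
  rewrite (prod_110 (A:=FW) (B:=FbT)) ?FbT010 //; last first.
    - by rewrite hFbT0 F0 raddf0 mulr0.
    - by rewrite hFW0.
  by rewrite hFW0.
have Eq := E 1%N 1%N m.
rewrite GW11 GbT11 RHS /conj2 Gstar in Eq.
set g := G 0%N 1%N in Eq Gstar.
set X := F 1%N 0%N * conjc (F 1%N 0%N) in Eq.
have h2 : (2 : R[i]) * 2^-1 = 1 by rewrite mulfV // pnatr_eq0.
have key : g * ('i * eps%:C) = X * g ^+ m * ('i * eps%:C).
  have L : g * kap - g * - kap = g * ('i * eps%:C) * (2 * 2^-1) by rewrite /kap; ring.
  have Rr : 2%:R * 'i * (2^-1 * eps%:C * (X * g ^+ m)) = X * g ^+ m * ('i * eps%:C) * (2 * 2^-1)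
    by ring.
  by move: Eq; rewrite L Rr h2 !mulr1.
have ieps : 'i * eps%:C != 0.
  rewrite mulf_neq0 //.
    by apply/eqP => -[] /eqP; rewrite oner_eq0.
  apply/eqP => -[] he.
  by case: heps => e; move: he; rewrite e => /eqP; rewrite ?oppr_eq0 oner_eq0.
have key2 := mulIf ieps key.
have dzF : dz F 0%N 0%N = F 1%N 0%N by rewrite /dz mul1r.
have dwG : dw G 0%N 0%N = g by rewrite /dw mul1r.
have dzG : dz G 0%N 0%N = 0 by rewrite /dz Ga0 mulr0.
rewrite det2 !mxE /= dzG mulr0 subr0 mulf_eq0 negb_or in hdet.
move/andP: hdet => [lam0 g0].
rewrite dwG in g0.
exists (dz F 0%N 0%N), (complex.Re g); split; last first.
  split.
  - move=> a b hb; have -> : b = 0%N by lia.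
    exact: Ga0.
  - move=> a b hb; rewrite /dz Gm ?mulr0 //; lia.
  - move=> l hl; apply: dwn_real => c _ hc.
    apply/complex_realP; exists (complex.Re (G 0%N c)); apply: Greal; lia.
split => //.
  rewrite dwG; apply: Greal => //.
rewrite dzF sqr_normc -/X.
have y0 : g ^+ (m - 1) != 0 by rewrite expf_neq0.
have hm1 : m = (m - 1).+1 by lia.
have Hone : 1 = X * g ^+ (m - 1).
  apply: (mulIf g0); rewrite mul1r {1}key2 {1}hm1 exprSr mulrA //.
rewrite fmorphV rmorphXn.
have hg : (complex.Re g)%:C = g := esym (Greal 1%N hm).
change (((complex.Re g)%:C) ^- (m - 1) = X); rewrite hg.
by rewrite -[X](mulfK y0) -Hone mul1r.
Qed.
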